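(* Let $t$ be even, $c\ge 0$ an integer, and $S\subseteq[n]$ with $|S|\geq n/k^c$. Let $\mathcal B$ be the following system of polynomial constraints in scalar variables $z_r^{i,j}$ ($r\in[n]$, $i,j\in[k]$) and vector variables $v_r\in\mathbb R^d$ ($r\in[n]$): (i) $z_r^{i,j}=(z_r^{i,j})^2$ for all $r,i,j$; (ii) $\sum_{i=1}^k\sum_{j=1}^k z_r^{i,j}=1$ for all $r$; (iii) $z_r^{i,j}z_s^{i,j}(v_r-v_s)=0$ for all $i,j\in[k]$, $r,s\in[n]$; (iv) for all $u\in\mathbb R^d$: $\frac1n\sum_{r=1}^n\langle v_r,u\rangle^t\leq 2\cdot(4t)^{t/2}\|u\|_2^t$. Then for all $i,j\in[k]$, $$\mathcal B\vdash_{O(t)}\ \frac{1}{|S|}\sum_{r\in S}z_r^{i,j}\|v_r\|_2^t\leq 2\cdot k^c\cdot(4t)^{t/2}.$$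
   Context: $\mathcal B\vdash_s p\geq 0$ means there is a degree-$s$ sum-of-squares proof: $p$ is a sum of terms $b\cdot\prod q$ with $b$ a sum of squares of polynomials and $q$ ranging over (products of) the constraints, each term of degree at most $s$ (an equality constraint $q=0$ may be used with either sign and multiplied by arbitrary polynomials). The universally quantified constraint (iv) is understood as being certified by a sum-of-squares proof in the variables $u$, so that it may be used in sum-of-squares proofs with $u$ instantiated as any vector whose entries are polynomials of degree at most $2$ in the variables $z_r^{i,j},v_r$. *)

(* Defs.v *)
From HB Require Import structures.
From mathcomp Require Import all_boot all_order all_algebra.
From mathcomp Require Import reals.
From mathcomp Require Import mpoly.
Set Implicit Arguments. Unset Strict Implicit. Unset Printing Implicit Defensive.
Import Order.TTheory GRing.Theory Num.Theory.
Local Open Scope ring_scope.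

(* Variables: z_r^{i,j} (r<n, i,j<k) and coordinates v_{r,l} (r<n, l<d). *)
Definition var_t (n k d : nat) : finType :=
  (('I_n * 'I_k * 'I_k) + ('I_n * 'I_d))%type.
Definition Nv (n k d : nat) : nat := #|{: var_t n k d}|.

Section Sys.
Variable R : realType.
Variables n k d : nat.
Notation P := {mpoly R[Nv n k d]}.

Definition zvar (r : 'I_n) (i j : 'I_k) : P := 'X_(enum_rank (inl (r, i, j) : var_t n k d)).
Definition vvar (r : 'I_n) (l : 'I_d) : P := 'X_(enum_rank (inr (r, l) : var_t n k d)).

Definition pdeg (p : P) : nat := (msize p).-1.

(* Equality constraints (i),(ii),(iii), as polynomials q with q = 0. *)
Definition eq_constr (q : P) : Prop :=
  (exists r i j, q = zvar r i j ^+ 2 - zvar r i j) \/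
  (exists r, q = \sum_(i < k) \sum_(j < k) zvar r i j - 1) \/
  (exists i j r s (l : 'I_d), q = zvar r i j * zvar s i j * (vvar r l - vvar s l)).

(* Inequality constraints (iv) q >= 0, with u instantiated as any vector of
   polynomials of degree at most 2 in the variables z, v. *)
Definition ineq_constr (t : nat) (q : P) : Prop :=
  exists u : 'I_d -> P, (forall l, pdeg (u l) <= 2)%N /\
    q = (2 * (4 * t%:R) ^+ (t %/ 2) : R)%:MP * (\sum_(l < d) u l ^+ 2) ^+ (t %/ 2)
        - (n%:R^-1 : R)%:MP * \sum_(r < n) (\sum_(l < d) vvar r l * u l) ^+ t.

Definition sos_proves (t s : nat) (p : P) : Prop :=
  exists (terms : seq (P * seq P)) (eqs : seq (P * P)),
    [/\ forall a, a \in terms ->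
          (forall q, q \in a.2 -> ineq_constr t q) /\
          (2 * pdeg a.1 + \sum_(q <- a.2) pdeg q <= s)%N,
        forall b, b \in eqs -> eq_constr b.2 /\ (pdeg b.1 + pdeg b.2 <= s)%N &
        p = \sum_(a <- terms) a.1 ^+ 2 * \prod_(q <- a.2) q
            + \sum_(b <- eqs) b.1 * b.2].

End Sys.

(* Main.v *)
Require Import Defs.
From HB Require Import structures.
From mathcomp Require Import all_boot all_order all_algebra.
From mathcomp Require Import reals.
From mathcomp Require Import mpoly.
From mathcomp Require Import zify ring lra.
Set Implicit Arguments. Unset Strict Implicit. Unset Printing Implicit Defensive.
Import Order.TTheory GRing.Theory Num.Theory.
Local Open Scope ring_scope.

Section Deg.
Variable R : realType.
Variables n k d : nat.
Notation P := {mpoly R[Nv n k d]}.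
Definition dle (p : P) (b : nat) := (pdeg p <= b)%N.

Lemma arithM (x y a b c : nat) : (x.-1 <= a -> y.-1 <= b -> a + b <= c -> 0 < x -> 0 < y -> (x + y).-2 <= c)%N.
Proof. rewrite -?subn2 -?subn1; lia. Qed.

Lemma dleM p q a b c : dle p a -> dle q b -> (a + b <= c)%N -> dle (p * q) c.
Proof.
rewrite /dle /pdeg => hp hq hc.
have [->|nz_p] := eqVneq p 0; first by rewrite mul0r msize0.
have [->|nz_q] := eqVneq q 0; first by rewrite mulr0 msize0.
rewrite msizeM //.
have h1 : (0 < msize p)%N by rewrite lt0n msize_poly_eq0.
have h2 : (0 < msize q)%N by rewrite lt0n msize_poly_eq0.
exact: arithM hp hq hc h1 h2.
Qed.

Lemma dleD p q a b c : dle p a -> dle q b -> (maxn a b <= c)%N -> dle (p + q) c.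
Proof.
rewrite /dle /pdeg => hp hq hc.
have := msizeD_le p q. lia.
Qed.

Lemma dleN p a c : dle p a -> (a <= c)%N -> dle (- p) c.
Proof. by rewrite /dle /pdeg msizeN => h1 h2; apply: leq_trans h2. Qed.

Lemma dleB p q a b c : dle p a -> dle q b -> (maxn a b <= c)%N -> dle (p - q) c.
Proof. move=> hp hq hc; apply: dleD hp _ hc; exact: dleN hq _. Qed.

Lemma dleC (x : R) c : dle x%:MP c.
Proof. rewrite /dle /pdeg msizeC; by case: (x != 0). Qed.

Lemma dle1 c : dle 1 c.
Proof. by rewrite -mpolyC1; apply dleC. Qed.

Lemma dle0 c : dle 0 c.
Proof. by rewrite -mpolyC0; apply dleC. Qed.

Lemma dleX p a e c : dle p a -> (e * a <= c)%N -> dle (p ^+ e) c.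
Proof.
move=> hp; elim: e c => [|e IH] c hc; first by rewrite expr0; apply dle1.
rewrite exprS; apply: (dleM hp (IH (e * a)%N (leqnn _))); lia.
Qed.

Lemma dle_sum (I : Type) (r : seq I) (Pr : pred I) (F : I -> P) a c :
  (forall i, dle (F i) a) -> (a <= c)%N -> dle (\sum_(i <- r | Pr i) F i) c.
Proof.
move=> hF hc; elim/big_rec: _ => [|i x _ hx]; first exact: dle0.
apply: dleD (hF i) hx _; lia.
Qed.

Lemma dleXv (i : 'I_(Nv n k d)) c : (1 <= c)%N -> dle 'X_i c.
Proof. by rewrite /dle /pdeg msizeX mdeg1. Qed.

Lemma dleW p a c : dle p a -> (a <= c)%N -> dle p c.
Proof. rewrite /dle; lia. Qed.
Lemma arA (x y z s a : nat) : (x <= a + z -> z + y <= s -> x + y <= s + a)%N. Proof. lia. Qed.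
Lemma arB (x z y s : nat) : (x <= z -> 2 * z + y <= s -> 2 * x + y <= s)%N. Proof. lia. Qed.
Lemma arC (x z y s : nat) : (x <= z -> z + y <= s -> x + y <= s)%N. Proof. lia. Qed.
Lemma arD (x y a b s : nat) : (x <= a -> y <= b -> 2 * a + b <= s -> 2 * x + y <= s)%N. Proof. lia. Qed.
Lemma arE (x a s : nat) : (x <= a -> 2 * a <= s -> 2 * x + 0 <= s)%N. Proof. lia. Qed.

Variable t : nat.
Implicit Types (p q e f h : P).

Definition eqI s p := exists eqs : seq (P * P),
  (forall b, b \in eqs -> eq_constr b.2 /\ (pdeg b.1 + pdeg b.2 <= s)%N) /\
  p = \sum_(b <- eqs) b.1 * b.2.

Lemma eqI0 s : eqI s 0.
Proof. by exists [::]; split => //; rewrite big_nil. Qed.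

Lemma eqID s p q : eqI s p -> eqI s q -> eqI s (p + q).
Proof.
move=> [e1 [h1 ->]] [e2 [h2 ->]]; exists (e1 ++ e2); split; last by rewrite big_cat.
by move=> b; rewrite mem_cat => /orP[/h1|/h2].
Qed.

Lemma eqIM s a f p : eqI s p -> dle f a -> eqI (s + a) (f * p).
Proof.
move=> [e1 [h1 ->]] hf; exists [seq (f * b.1, b.2) | b <- e1]; split.
  move=> b /mapP [b0 hb0 ->] /=; have [hc hd] := h1 _ hb0; split => //.
  have H : dle (f * b0.1) (a + pdeg b0.1) by apply: dleM hf (leqnn _) _.
  exact: arA H hd.
by rewrite big_map mulr_sumr; apply: eq_bigr => b _; rewrite mulrA.
Qed.

Lemma eqIW s s' p : eqI s p -> (s <= s')%N -> eqI s' p.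
Proof.
move=> [e1 [h1 ->]] hs; exists e1; split => // b /h1 [? H]; split => //; exact: leq_trans H hs.
Qed.

Lemma eqIMW s a f p s' : eqI s p -> dle f a -> (s + a <= s')%N -> eqI s' (f * p).
Proof. by move=> h hf hs; apply: eqIW (eqIM h hf) hs. Qed.

Lemma eqIN s p : eqI s p -> eqI s (- p).
Proof.
move=> h; have -> : - p = (-1)%:MP * p by rewrite mpolyCN mpolyC1 mulN1r.
have H := eqIM h (dleC (-1) 0). by rewrite addn0 in H.
Qed.

Lemma eqIB s p q : eqI s p -> eqI s q -> eqI s (p - q).
Proof. by move=> hp hq; apply: eqID hp (eqIN hq). Qed.

Lemma eqI_sum (I : Type) (r : seq I) (Pr : pred I) (F : I -> P) s :
  (forall i, eqI s (F i)) -> eqI s (\sum_(i <- r | Pr i) F i).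
Proof.
move=> hF; elim/big_rec: _ => [|i x _ hx]; first exact: eqI0.
exact: eqID.
Qed.

Lemma eqIgen s a b f e : eq_constr e -> dle f a -> dle e b -> (a + b <= s)%N -> eqI s (f * e).
Proof.
move=> he hf hb hs; exists [:: (f, e)]; split; last by rewrite big_seq1.
move=> x; rewrite inE => /eqP -> /=; split => //; exact: leq_trans (leq_add hf hb) hs.
Qed.

Definition cone s p := sos_proves t s p.

Lemma cone_eq s p : eqI s p -> cone s p.
Proof.
move=> [e1 [h1 ->]]; exists [::], e1; split => //; by rewrite big_nil add0r.
Qed.

Lemma cone_add s p q : cone s p -> cone s q -> cone s (p + q).
Proof.
move=> [t1 [e1 [a1 b1 ->]]] [t2 [e2 [a2 b2 ->]]].
exists (t1 ++ t2), (e1 ++ e2); split.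
- by move=> x; rewrite mem_cat => /orP[/a1|/a2].
- by move=> x; rewrite mem_cat => /orP[/b1|/b2].
- rewrite !big_cat /=. ring.
Qed.

Lemma cone_sum (I : Type) (r : seq I) (Pr : pred I) (F : I -> P) s :
  (forall i, Pr i -> cone s (F i)) -> cone s (\sum_(i <- r | Pr i) F i).
Proof.
move=> hF; elim/big_rec: _ => [|i x hi hx]; first by apply: cone_eq; exact: eqI0.
exact: cone_add (hF _ hi) hx.
Qed.

Lemma cone_ineq s a b h q : ineq_constr t q -> dle h a -> dle q b -> (2 * a + b <= s)%N ->
  cone s (h ^+ 2 * q).
Proof.
move=> hq ha hb hs; exists [:: (h, [:: q])], [::]; split => //.
- move=> x; rewrite inE => /eqP -> /=; split.
    by move=> y; rewrite inE => /eqP ->.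
  rewrite big_seq1; exact: arD ha hb hs.
- by rewrite big_nil addr0 big_seq1 /= big_seq1.
Qed.

Lemma cone_sq s a h : dle h a -> (2 * a <= s)%N -> cone s (h ^+ 2).
Proof.
move=> ha hs; exists [:: (h, [::])], [::]; split => //.
- move=> x; rewrite inE => /eqP -> /=; split => //.
  rewrite big_nil; exact: arE ha hs.
- by rewrite big_nil addr0 big_seq1 /= big_nil mulr1.
Qed.

Lemma cone_scale s (c : R) p : 0 <= c -> cone s p -> cone s (c%:MP * p).
Proof.
move=> hc [t1 [e1 [a1 b1 ->]]].
exists [seq ((Num.sqrt c)%:MP * x.1, x.2) | x <- t1], [seq (c%:MP * x.1, x.2) | x <- e1]; split.
- move=> x /mapP [x0 hx0 ->] /=; have [h1 h2] := a1 _ hx0; split => //.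
  have H : dle ((Num.sqrt c)%:MP * x0.1) (pdeg x0.1) by apply: dleM (dleC _ 0) (leqnn _) _.
  exact: arB H h2.
- move=> x /mapP [x0 hx0 ->] /=; have [h1 h2] := b1 _ hx0; split => //.
  have H : dle (c%:MP * x0.1) (pdeg x0.1) by apply: dleM (dleC _ 0) (leqnn _) _.
  exact: arC H h2.
- rewrite !big_map mulrDr !mulr_sumr; congr (_ + _); apply: eq_bigr => x _ /=.
    by rewrite exprMn -rmorphXn /= sqr_sqrtr // mulrA.
  by rewrite mulrA.
Qed.

Lemma coneW s s' p : cone s p -> (s <= s')%N -> cone s' p.
Proof.
move=> [t1 [e1 [a1 b1 ->]]] hs; exists t1, e1; split => //.
- by move=> x /a1 [? H]; split => //; exact: leq_trans H hs.
- by move=> x /b1 [? H]; split => //; exact: leq_trans H hs.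
Qed.

Lemma cone_eqv s p q : cone s p -> eqI s (q - p) -> cone s q.
Proof.
move=> hp he; have -> : q = p + (q - p) by ring.
by apply: cone_add hp (cone_eq he).
Qed.


Lemma dle_geom (x y : P) (e : nat) : dle x 2 -> dle y 2 ->
  dle (\sum_(a < e) x ^+ (e.-1 - a) * y ^+ a) (2 * e).
Proof.
move=> hx hy; apply: dle_sum (leqnn _) => a.
apply: (dleM (dleX hx (leqnn _)) (dleX hy (leqnn _))).
have := ltn_ord a; lia.
Qed.

Variables (i j : 'I_k).
Definition z (r : 'I_n) : P := zvar R d r i j.
Definition v (r : 'I_n) (l : 'I_d) : P := vvar R k r l.
Definition Pr (r : 'I_n) : P := \sum_(l < d) v r l ^+ 2.
Definition G (r s : 'I_n) : P := \sum_(l < d) v s l * v r l.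

Lemma dle_z r c : (1 <= c)%N -> dle (z r) c.
Proof. by move=> h; rewrite /z /zvar; apply: dleXv. Qed.
Lemma dle_v r l c : (1 <= c)%N -> dle (v r l) c.
Proof. by move=> h; rewrite /v /vvar; apply: dleXv. Qed.
Lemma dle_Pr r : dle (Pr r) 2.
Proof.
apply: dle_sum (leqnn _) => l; apply: (dleX (dle_v r l (leqnn 1))); done.
Qed.
Lemma dle_G r s : dle (G r s) 2.
Proof.
apply: dle_sum (leqnn _) => l; apply: (dleM (dle_v s l (leqnn 1)) (dle_v r l (leqnn 1))); done.
Qed.

Lemma eq_z2 r s0 : (2 <= s0)%N -> eqI s0 (z r ^+ 2 - z r).
Proof.
move=> hs; rewrite -[_ - _]mul1r; apply: (eqIgen (a := 0) (b := 2)) => //.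
- by left; exists r, i, j.
- exact: dle1.
- apply: dleB (dleX (dle_z r (leqnn 1)) (leqnn _)) (dle_z r (leqnn 1)) _; done.
Qed.

Lemma eq_zpow r a : eqI a.+2 (z r ^+ a.+1 - z r).
Proof.
elim: a => [|a IH]; first by rewrite expr1 subrr; apply: eqI0.
have -> : z r ^+ a.+2 - z r = z r * (z r ^+ a.+1 - z r) + (z r ^+ 2 - z r).
  by rewrite !exprS; ring.
apply: eqID; last by apply: eq_z2.
apply: (eqIMW IH (dle_z r (leqnn 1))); lia.
Qed.

Lemma eq_zpowW r a s0 : (a.+2 <= s0)%N -> eqI s0 (z r ^+ a.+1 - z r).
Proof. by move=> h; apply: eqIW (eq_zpow r a) h. Qed.

Lemma L_diff r s (W : 'I_d -> P) a s0 : (forall l, dle (W l) a) -> (a + 3 <= s0)%N ->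
  eqI s0 (z r * z s * \sum_(l < d) (v r l - v s l) * W l).
Proof.
move=> hW hs; rewrite mulr_sumr; apply: eqI_sum => l.
have -> : z r * z s * ((v r l - v s l) * W l) = W l * (z r * z s * (v r l - v s l)) by ring.
apply: (eqIgen _ (hW l) _ hs).
- by right; right; exists i, j, r, s, l.
- apply: (dleM (dleM (dle_z r (leqnn 1)) (dle_z s (leqnn 1)) (leqnn 2))
          (dleB (dle_v r l (leqnn 1)) (dle_v s l (leqnn 1)) (leqnn 1))); done.
Qed.

Hypothesis ht : (t = t %/ 2 + t %/ 2)%N.
Notation m := (t %/ 2)%N.
Definition K : R := 2 * (4 * t%:R) ^+ (t %/ 2).
Definition ninv : R := n%:R^-1.
Definition X (r : 'I_n) : P := Pr r ^+ m.
Definition s0 := (10 * t.+1)%N.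

Lemma dle_X r : dle (X r) t.
Proof. apply: dleX (dle_Pr r) _; lia. Qed.

Definition qr (r : 'I_n) : P :=
  K%:MP * (\sum_(l < d) (z r * v r l) ^+ 2) ^+ m
  - ninv%:MP * \sum_(s < n) (\sum_(l < d) vvar R k s l * (z r * v r l)) ^+ t.

Lemma ineq_qr r : ineq_constr t (qr r).
Proof.
exists (fun l => z r * v r l); split => //.
move=> l; exact: (dleM (dle_z r (leqnn 1)) (dle_v r l (leqnn 1))).
Qed.

Lemma dle_qr r : dle (qr r) (3 * t).
Proof.
apply: (dleB (a := (3 * t)%N) (b := (3 * t)%N)); last by rewrite maxnn.
  apply: (dleM (a := 0) (b := (3 * t)%N) (dleC _ 0)); last by rewrite add0n.
  apply: (dleX (a := 4)); last lia.
  apply: dle_sum (leqnn _) => l.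
  apply: (dleX (a := 2)) => //.
  exact: (dleM (dle_z r (leqnn 1)) (dle_v r l (leqnn 1))).
apply: (dleM (a := 0) (b := (3 * t)%N) (dleC _ 0)); last by rewrite add0n.
apply: dle_sum (leqnn _) => s.
apply: (dleX (a := 3)); last lia.
apply: dle_sum (leqnn _) => l.
apply: (dleM (a := 1) (b := 2) (dle_v s l (leqnn 1))); last done.
exact: (dleM (dle_z r (leqnn 1)) (dle_v r l (leqnn 1))).
Qed.

Lemma stepA r : cone s0 (z r ^+ 2 * qr r).
Proof.
apply: (cone_ineq (ineq_qr r) (dle_z r (leqnn 1)) (dle_qr r)); rewrite /s0; lia.
Qed.

Lemma stepB r : eqI s0 (z r ^+ 2 * qr r
   - (K%:MP * (z r * X r) - ninv%:MP * \sum_(s < n) z r * G r s ^+ t)).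
Proof.
have e1 : \sum_(l < d) (z r * v r l) ^+ 2 = z r ^+ 2 * Pr r.
  by rewrite /Pr mulr_sumr; apply: eq_bigr => l _; rewrite exprMn.
have e2 s : \sum_(l < d) vvar R k s l * (z r * v r l) = z r * G r s.
  by rewrite /G mulr_sumr; apply: eq_bigr => l _; rewrite /v mulrCA.
rewrite /qr e1; under eq_bigr => s _ do rewrite e2.
set A := \sum_(s < n) (z r * G r s) ^+ t.
set B := \sum_(s < n) z r * G r s ^+ t.
have -> : z r ^+ 2 * (K%:MP * (z r ^+ 2 * Pr r) ^+ m - ninv%:MP * A) -
    (K%:MP * (z r * X r) - ninv%:MP * B) =
    K%:MP * (z r ^+ 2 * (z r ^+ 2 * Pr r) ^+ m - z r * X r) - ninv%:MP * (z r ^+ 2 * A - B).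
  by ring.
apply: eqIB.
  apply: (eqIMW (s := s0) (a := 0)) (dleC _ _) _; last by rewrite addn0.
  have -> : z r ^+ 2 * (z r ^+ 2 * Pr r) ^+ m - z r * X r
     = X r * (z r ^+ (2 * m).+1.+1 - z r).
    by rewrite exprMn -exprM -[in RHS]addn2 exprD /X; ring.
  apply: (eqIMW (eq_zpow r (2 * m).+1) (dle_X r)); rewrite /s0; lia.
apply: (eqIMW (s := s0) (a := 0)) (dleC _ _) _; last by rewrite addn0.
rewrite /A /B mulr_sumr -sumrB; apply: eqI_sum => s.
have -> : z r ^+ 2 * (z r * G r s) ^+ t - z r * G r s ^+ t
   = G r s ^+ t * (z r ^+ t.+2 - z r).
  by rewrite exprMn -[in RHS]addn2 exprD; ring.
apply: (eqIMW (eq_zpow r t.+1) (dleX (dle_G r s) (leqnn _))); rewrite /s0; lia.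
Qed.

Lemma X2 r : X r ^+ 2 = Pr r ^+ t.
Proof. by rewrite /X -exprM; congr (_ ^+ _); lia. Qed.

Lemma stepD r s : cone s0 (z r * z s * X r ^+ 2).
Proof.
apply: (cone_eqv (p := (z r * z s * X r) ^+ 2)).
  apply: (cone_sq (a := (t + 2)%N)); last by rewrite /s0; lia.
  apply: (dleM (dleM (dle_z r (leqnn 1)) (dle_z s (leqnn 1)) (leqnn _)) (dle_X r)); lia.
have -> : z r * z s * X r ^+ 2 - (z r * z s * X r) ^+ 2 =
  (- (X r ^+ 2 * z s ^+ 2)) * (z r ^+ 2 - z r) + (- (X r ^+ 2 * z r)) * (z s ^+ 2 - z s).
  ring.
have hX2 : dle (X r ^+ 2) (2 * t) by apply: (dleX (dle_X r)).
apply: eqID.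
  apply: (eqIMW (s := 2) (a := (2 * t + 2)%N)); first exact: eq_z2.
    apply: dleN (dleM hX2 (dleX (dle_z s (leqnn 1)) (leqnn _)) (leqnn _)) _; lia.
  rewrite /s0; lia.
apply: (eqIMW (s := 2) (a := (2 * t + 1)%N)); first exact: eq_z2.
  apply: dleN (dleM hX2 (dle_z r (leqnn 1)) (leqnn _)) _; lia.
rewrite /s0; lia.
Qed.

Lemma stepC r s : cone s0 (z r * G r s ^+ t - z r * z s * X r ^+ 2).
Proof.
rewrite X2.
have hGt : dle (G r s ^+ t) (2 * t) by apply: (dleX (dle_G r s)); rewrite mulnC.
have -> : z r * G r s ^+ t - z r * z s * Pr r ^+ t =
   z r * (1 - z s) * G r s ^+ t + z r * z s * (G r s ^+ t - Pr r ^+ t) by ring.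
apply: cone_add.
  apply: (cone_eqv (p := (z r * (1 - z s) * G r s ^+ m) ^+ 2)).
    apply: (cone_sq (a := (t + 2)%N)); last by rewrite /s0; lia.
    apply: (dleM (dleM (dle_z r (leqnn 1)) (dleB (dle1 1) (dle_z s (leqnn 1)) (leqnn _)) (leqnn _))
      (dleX (dle_G r s) (leqnn _))); lia.
  have eG : (G r s ^+ m) ^+ 2 = G r s ^+ t by rewrite -exprM; congr (_ ^+ _); lia.
  have -> : z r * (1 - z s) * G r s ^+ t - (z r * (1 - z s) * G r s ^+ m) ^+ 2 =
    (- (G r s ^+ t * (1 - z s) ^+ 2)) * (z r ^+ 2 - z r) + (- (G r s ^+ t * z r)) * (z s ^+ 2 - z s).
    rewrite exprMn eG; ring.
  apply: eqID.
    apply: (eqIMW (s := 2) (a := (2 * t + 2)%N)); first exact: eq_z2.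
      apply: dleN (dleM hGt (dleX (dleB (dle1 1) (dle_z s (leqnn 1)) (leqnn _)) (leqnn _)) (leqnn _)) _; lia.
    rewrite /s0; lia.
  apply: (eqIMW (s := 2) (a := (2 * t + 1)%N)); first exact: eq_z2.
    apply: dleN (dleM hGt (dle_z r (leqnn 1)) (leqnn _)) _; lia.
  rewrite /s0; lia.
apply: cone_eq.
rewrite subrXX.
set W := \sum_(_ < t) _.
have hW : dle W (2 * t) by apply: dle_geom; [exact: dle_G | exact: dle_Pr].
have hGP : G r s - Pr r = \sum_(l < d) (v s l - v r l) * v r l.
  by rewrite /G /Pr -sumrB; apply: eq_bigr => l _; rewrite /v; ring.
have -> : z r * z s * ((G r s - Pr r) * W) = z s * z r * \sum_(l < d) (v s l - v r l) * (v r l * W).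
  rewrite hGP mulr_suml; under [in RHS]eq_bigr => l _ do rewrite mulrA; ring.
apply: (@L_diff s r (fun l => v r l * W) (2 * t + 1)%N); last by rewrite /s0; lia.
move=> l; apply: dleM (dle_v r l (leqnn 1)) hW _; lia.
Qed.

Variable S : {set 'I_n}.
Definition Y : P := \sum_(r in S) z r * X r.

Lemma stepE : eqI s0 (\sum_(r in S) \sum_(s in S) z r * z s * X r ^+ 2 - Y ^+ 2).
Proof.
rewrite /Y expr2 mulr_suml; under [X in _ - X]eq_bigr => r _ do rewrite mulr_sumr.
rewrite -sumrB; apply: eqI_sum => r; rewrite -sumrB; apply: eqI_sum => s.
rewrite /X.
pose W := \sum_(a < m) Pr r ^+ (m.-1 - a) * Pr s ^+ a.
have hW : dle W (2 * m) by apply: dle_geom; exact: dle_Pr.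
have hPP : Pr r - Pr s = \sum_(l < d) (v r l - v s l) * (v r l + v s l).
  by rewrite /Pr -sumrB; apply: eq_bigr => l _; ring.
have -> : z r * z s * Pr r ^+ m ^+ 2 - z r * Pr r ^+ m * (z s * Pr s ^+ m)
   = z r * z s * \sum_(l < d) (v r l - v s l) * ((v r l + v s l) * (Pr r ^+ m * W)).
  have -> : z r * z s * Pr r ^+ m ^+ 2 - z r * Pr r ^+ m * (z s * Pr s ^+ m)
     = z r * z s * (Pr r ^+ m * (Pr r ^+ m - Pr s ^+ m)) by ring.
  rewrite subrXX -/W hPP; under [in RHS]eq_bigr => l _ do rewrite mulrA; rewrite -mulr_suml; ring.
apply: (@L_diff r s _ (2 * t + 1)%N); last by rewrite /s0; lia.
move=> l; apply: (dleM (dleD (dle_v r l (leqnn 1)) (dle_v s l (leqnn 1)) (leqnn _))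
   (dleM (dle_X r) hW (leqnn _))); lia.
Qed.

Lemma ninv_ge0 : 0 <= ninv.
Proof. by rewrite /ninv invr_ge0 ler0n. Qed.

Lemma stepAr r : cone s0 (K%:MP * (z r * X r) - ninv%:MP * \sum_(s < n) z r * z s * X r ^+ 2).
Proof.
apply: (cone_eqv (p := z r ^+ 2 * qr r + ninv%:MP * \sum_(s < n) (z r * G r s ^+ t - z r * z s * X r ^+ 2))).
  apply: cone_add; first exact: stepA.
  apply: cone_scale; first exact: ninv_ge0.
  by apply: cone_sum => s _; apply: stepC.
rewrite sumrB.
have -> : K%:MP * (z r * X r) - ninv%:MP * \sum_(s < n) z r * z s * X r ^+ 2 -
   (z r ^+ 2 * qr r + ninv%:MP * (\sum_(s < n) z r * G r s ^+ t - \sum_(s < n) z r * z s * X r ^+ 2))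
   = - (z r ^+ 2 * qr r - (K%:MP * (z r * X r) - ninv%:MP * \sum_(s < n) z r * G r s ^+ t)) by ring.
apply: eqIN; exact: stepB.
Qed.

Lemma cone1 : cone s0 (K%:MP * Y - ninv%:MP * Y ^+ 2).
Proof.
set T2 := \sum_(r in S) \sum_(s in S) z r * z s * X r ^+ 2.
set T3 := \sum_(r in S) \sum_(s | s \notin S) z r * z s * X r ^+ 2.
have hT : \sum_(r in S) \sum_(s < n) z r * z s * X r ^+ 2 = T2 + T3.
  rewrite /T2 /T3 -big_split /=; apply: eq_bigr => r _.
  by rewrite (bigID (fun s => s \in S)).
have hA : \sum_(r in S) (K%:MP * (z r * X r) - ninv%:MP * \sum_(s < n) z r * z s * X r ^+ 2)
   = K%:MP * Y - ninv%:MP * (T2 + T3).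
  by rewrite sumrB -!mulr_sumr hT.
have -> : K%:MP * Y - ninv%:MP * Y ^+ 2 =
  \sum_(r in S) (K%:MP * (z r * X r) - ninv%:MP * \sum_(s < n) z r * z s * X r ^+ 2)
  + ninv%:MP * T3 + ninv%:MP * (T2 - Y ^+ 2).
  rewrite hA; ring.
apply: cone_add; last first.
  apply: cone_scale; first exact: ninv_ge0.
  apply: cone_eq; exact: stepE.
apply: cone_add.
  by apply: cone_sum => r _; apply: stepAr.
apply: cone_scale; first exact: ninv_ge0.
apply: cone_sum => r _; apply: cone_sum => s _; exact: stepD.
Qed.

Lemma Kpos : 0 < K.
Proof.
rewrite /K; apply: mulr_gt0 => //.
have [->|tpos] := posnP t; first by rewrite div0n expr0.
by apply: exprn_gt0; apply: mulr_gt0 => //; rewrite ltr0n.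
Qed.

Lemma dle_Y : dle Y t.+1.
Proof.
apply: dle_sum (leqnn _) => r; apply: (dleM (dle_z r (leqnn 1)) (dle_X r)); lia.
Qed.

Lemma final_cone (c : nat) : (n <= #|S| * k ^ c)%N ->
  cone s0 ((2 * (k%:R) ^+ c * (4 * t%:R) ^+ (t %/ 2) : R)%:MP - ((#|S|%:R)^-1 : R)%:MP * Y).
Proof.
move=> hS.
have hK := Kpos.
have c0ge : 0 <= (2 * (k%:R) ^+ c * (4 * t%:R) ^+ (t %/ 2) : R).
  apply: mulr_ge0; first (apply: mulr_ge0 => //; apply: exprn_ge0; exact: ler0n).
  apply: exprn_ge0; apply: mulr_ge0 => //; exact: ler0n.
have [n0|npos] := posnP n.
  have -> : Y = 0.
    by rewrite /Y big1 // => r _; have := ltn_ord r; lia.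
  rewrite mulr0 subr0.
  set cc := (2 * _ * _ : R).
  have -> : (cc%:MP : P) = cc%:MP * 1 ^+ 2 by rewrite expr1n mulr1.
  apply: cone_scale c0ge _; apply: (cone_sq (a := 0)); [exact: dle1 | done].
have Spos : (0 < #|S|)%N.
  have : (0 < #|S| * k ^ c)%N by lia.
  by rewrite muln_gt0 => /andP[].
set Si := ((#|S|%:R)^-1 : R).
set a := Si / (K * n%:R).
set M : P := (K * n%:R)%:MP.
have nR0 : (n%:R : R) != 0 by rewrite pnatr_eq0 -lt0n.
have Kn0 : K * n%:R != 0 by apply: mulf_neq0 => //; exact: lt0r_neq0.
have c1' : cone s0 (M * Y - Y ^+ 2).
  have := cone_scale (c := n%:R) (ler0n _ _) cone1.
  have hn : (n%:R%:MP * ninv%:MP : P) = 1.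
    by rewrite -mpolyCM /ninv mulfV ?mpolyC1.
  have -> : (n%:R)%:MP * (K%:MP * Y - ninv%:MP * Y ^+ 2)
     = (K%:MP * (n%:R)%:MP) * Y - (n%:R%:MP * ninv%:MP) * Y ^+ 2 by ring.
  by rewrite hn mul1r /M -[K%:MP * _]mpolyCM.
set c0 := K * (k%:R) ^+ c - Si * (K * n%:R).
have c0pos : 0 <= c0.
  have -> : c0 = K * ((k%:R) ^+ c - n%:R * Si) by rewrite /c0; ring.
  apply: mulr_ge0 (ltW hK) _; rewrite subr_ge0 /Si.
  rewrite ler_pdivrMr ?ltr0n // -natrX -natrM ler_nat mulnC //.
have apos : 0 <= a.
  by rewrite /a divr_ge0 // ?invr_ge0 ?ler0n // mulr_ge0 ?ler0n // ltW.
have hM : a%:MP * M = Si%:MP by rewrite /M -mpolyCM /a divfK.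
have -> : (2 * (k%:R) ^+ c * (4 * t%:R) ^+ (t %/ 2) : R)%:MP - Si%:MP * Y
   = c0%:MP * 1 ^+ 2 + a%:MP * ((M - Y) ^+ 2 + (M * Y - Y ^+ 2)).
  have -> : a%:MP * ((M - Y) ^+ 2 + (M * Y - Y ^+ 2)) = (a%:MP * M) * (M - Y) by ring.
  rewrite hM.
  have -> : (2 * (k%:R) ^+ c * (4 * t%:R) ^+ (t %/ 2) : R)%:MP = c0%:MP + Si%:MP * M.
    by rewrite /M -mpolyCM -mpolyCD /c0 /K; congr (_%:MP); ring.
  ring.
apply: cone_add.
  apply: cone_scale c0pos _; apply: (cone_sq (a := 0)); [exact: dle1 | done].
apply: cone_scale apos _; apply: cone_add c1'.
apply: (cone_sq (a := t.+1)); last by rewrite /s0; lia.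
apply: dleB (dleC _ 0) dle_Y _; lia.
Qed.
End Deg.

Theorem lemma5p3 :
  exists C : nat, forall (R : realType) (n k d t c : nat) (S : {set 'I_n}),
    ~~ odd t ->
    (n <= #|S| * k ^ c)%N ->
    forall i j : 'I_k,
      sos_proves t (C * t.+1)
        ((2 * (k%:R) ^+ c * (4 * t%:R) ^+ (t %/ 2) : R)%:MP
         - ((#|S|%:R)^-1 : R)%:MP * \sum_(r in S)
             zvar R d r i j * (\sum_(l < d) vvar R k r l ^+ 2) ^+ (t %/ 2)
           : {mpoly R[Nv n k d]}).
Proof.
exists 10%N => R n k d t c S ho hS i j.
have ht : (t = t %/ 2 + t %/ 2)%N.
  by rewrite {1}(divn_eq t 2) modn2 (negbTE ho) addn0 muln2 -addnn.
exact: (@final_cone R n k d t i j ht S c hS).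
Qed.
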